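(* Let $T$ be an unmixed balanced tree of height 3, labeled as in the context. Then every facet of $\mathcal{S}_{even}(T)$ has the form $V_{even}\setminus\{u_{1,a_1},\dots,u_{p,a_p}\}$ with $1\le a_i\le k_i$, and ordering the facets $F$ of $\mathcal{S}_{even}(T)$ by the order $<_P$ of their vectors $\nu(F)=(a_1,\dots,a_p)$ gives a shelling of $\mathcal{S}_{even}(T)$.
   Context: $N(v)=\{u:uv\in E\}$, $N(D)=\bigcup_{v\in D}N(v)$. A leaf is a vertex of degree 1; height of a vertex = minimum distance to a leaf; $V_k$ = vertices of height $k$; $V_{even}$, $V_{odd}$ = vertices of even/odd height; $T$ is balanced if no two adjacent vertices have the same height. A TD-set is $D$ with $N(D)=V$, minimal if no proper subset is; $T$ unmixed if all minimal TD-sets have equal size. An odd-TD-set is $D$ with $N(D)\supseteq V_{odd}$, minimal if no proper subset is one; $\mathcal{S}_{even}(T)$ is the simplicial complex on $V_{even}$ whose facets are $V_{even}\setminus D$, $D$ a minimal odd-TD-set. Labeling: in an unmixed balanced tree of height 3, each height-1 vertex has exactly one neighbor of height 2 and vice versa; write $V_1=\{s_1,\dots,s_p\}$, let $u_{i,1}$ be the unique height-2 neighbor of $s_i$ (so $V_2=\{u_{1,1},\dots,u_{p,1}\}$), $k_i=|N(s_i)|$, and $\{u_{i,2},\dots,u_{i,k_i}\}=N(s_i)\cap V_0$. For $\alpha=(a_1,\dots,a_p)$ let $\ell(\alpha)=|\{i: a_i=1\}|$; define $\alpha<_P\beta$ iff $\ell(\alpha)>\ell(\beta)$, or $\ell(\alpha)=\ell(\beta)$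 and $\alpha$ is lexicographically smaller than $\beta$. A pure simplicial complex is shelled by an ordering $F_1,\dots,F_m$ of its facets if for all $1\le i<j\le m$ there exist $v\in F_j\setminus F_i$ and $k<j$ with $F_j\setminus F_k=\{v\}$. *)

(* Defs.v *)
(* Finite simple graphs as symmetric irreflexive relations. *)
From mathcomp Require Import all_boot.
Set Implicit Arguments. Unset Strict Implicit. Unset Printing Implicit Defensive.

Section Graph.
Variables (V : finType) (e : rel V).

Definition nbhd (v : V) : {set V} := [set w | e v w].
Definition nbhdS (D : {set V}) : {set V} := [set w | [exists d in D, e d w]].

(* a finite tree: simple graph, connected, with |E| = |V| - 1
   (ordered pairs of adjacent vertices counted twice) *)
Definition is_tree : Prop :=
  symmetric e /\ irreflexive e /\ (forall x y : V, connect e x y) /\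
  #|[set pq : V * V | e pq.1 pq.2]| = 2 * (#|V| - 1).

Definition is_leaf (v : V) : bool := #|nbhd v| == 1.

Fixpoint ball (v : V) (n : nat) : {set V} :=
  if n is m.+1 then ball v m :|: nbhdS (ball v m) else [set v].

Definition height (v : V) : nat :=
  find (fun n => [exists w in ball v n, is_leaf w]) (iota 0 #|V|).

Definition tree_height : nat := \max_(v : V) height v.

Definition Vh (k : nat) : {set V} := [set v | height v == k].
Definition Veven : {set V} := [set v | ~~ odd (height v)].
Definition Vodd : {set V} := [set v | odd (height v)].

Definition balanced : Prop := forall x y : V, e x y -> height x != height y.

Definition is_TD (D : {set V}) : bool := nbhdS D == [set: V].
Definition minimal_TD (D : {set V}) : bool := minset is_TD D.
Definition unmixed : Prop :=
  forall D1 D2 : {set V}, minimal_TD D1 -> minimal_TD D2 -> #|D1| = #|D2|.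

Definition is_oddTD (D : {set V}) : bool := Vodd \subset nbhdS D.
Definition minimal_oddTD (D : {set V}) : bool := minset is_oddTD D.

Definition Seven_facet (F : {set V}) : Prop :=
  exists D : {set V}, minimal_oddTD D /\ F = Veven :\: D.

End Graph.

Definition ell (p : nat) (a : 'I_p -> nat) : nat := #|[set i : 'I_p | a i == 1]|.

Definition lex_lt (p : nat) (a b : 'I_p -> nat) : Prop :=
  exists i : 'I_p, a i < b i /\ (forall j : 'I_p, j < i -> a j = b j).

Definition ltP_order (p : nat) (a b : 'I_p -> nat) : Prop :=
  ell b < ell a \/ (ell a = ell b /\ lex_lt a b).

Definition Uset (V : finType) (p : nat) (u : 'I_p -> nat -> V) (a : 'I_p -> nat)
  : {set V} := [set u i (a i) | i : 'I_p].

Definition in_range (p : nat) (k a : 'I_p -> nat) : Prop :=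
  forall i : 'I_p, 1 <= a i <= k i.

(* Main.v *)
Require Import Defs.
From mathcomp Require Import all_boot zify.
Set Implicit Arguments. Unset Strict Implicit. Unset Printing Implicit Defensive.

Section Basic.
Variables (V : finType) (e : rel V).
Hypothesis esym : symmetric e.
Local Notation h := (height e).
Local Notation P v n := [exists w in ball e v n, is_leaf e w].

Lemma height_le v : h v <= #|V|.
Proof. rewrite /height. by rewrite -[X in _ <= X](size_iota 0 #|V|) find_size. Qed.

Lemma ball_self v n : v \in ball e v n.
Proof. elim: n => [|n IH] /=; [by rewrite inE | by rewrite inE IH]. Qed.

Lemma ball_edge x y n w : e x y -> w \in ball e x n -> w \in ball e y n.+1.
Proof.
move=> exy; elim: n w => [|n IH] w /=.
  rewrite inE => /eqP ->. rewrite inE; apply/orP; right.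
  rewrite /nbhdS inE; apply/existsP; exists y. by rewrite inE eqxx esym.
rewrite inE => /orP [/IH H| ]; first by rewrite inE H.
rewrite /nbhdS inE => /existsP [z /andP [zb ezw]].
rewrite inE; apply/orP; right. rewrite /nbhdS inE; apply/existsP; exists z. by rewrite IH.
Qed.

Lemma height_min v n : P v n -> h v <= n.
Proof.
move=> Pn; case: (ltnP n #|V|) => [lt|ge]; last by apply: leq_trans (height_le v) ge.
rewrite leqNgt; apply/negP => lt2.
have := before_find 0 lt2. rewrite nth_iota // add0n /= Pn. done.
Qed.

Lemma height_spec v : h v < #|V| -> P v (h v).
Proof.
move=> lt. have hs : has (fun n => P v n) (iota 0 #|V|) by rewrite has_find size_iota.
have := nth_find 0 hs. by rewrite nth_iota ?size_iota // add0n.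
Qed.

Lemma height_edge x y : e x y -> h y <= (h x).+1.
Proof.
move=> exy. case: (ltnP (h x) #|V|) => [lt|ge].
  apply: height_min. have /existsP [w /andP [wb lw]] := height_spec lt.
  apply/existsP; exists w. by rewrite (ball_edge exy wb) lw.
apply: leq_trans (height_le y) _. by apply: leq_trans ge _.
Qed.

Lemma height0 v : (h v == 0) = is_leaf e v.
Proof.
apply/idP/idP.
  move/eqP=> h0. have lt : h v < #|V| by rewrite h0; apply/card_gt0P; exists v.
  have := height_spec lt. rewrite h0 /= => /existsP [w /andP []]. by rewrite inE => /eqP ->.
move=> lv. rewrite -leqn0. apply: height_min. apply/existsP; exists v. by rewrite /= inE eqxx lv.
Qed.

Lemma height2 d : 2 < #|V| -> h d = 2 -> exists2 x, e d x & h x = 1.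
Proof.
move=> lt hd.
have hlt : h d < #|V| by rewrite hd.
have /existsP [w /andP [wb lw]] := height_spec hlt.
rewrite hd in wb.
have nP1 : ~~ P d 1.
  apply/negP => /height_min; by rewrite hd.
move: wb; rewrite /= inE => /orP [wb1|].
  by case/negP: nP1; apply/existsP; exists w; rewrite wb1 lw.
rewrite /nbhdS inE => /existsP [z /andP [zb ezw]].
move: zb; rewrite inE => /orP [].
  rewrite inE => /eqP zd; subst z.
  case/negP: nP1; apply/existsP; exists w; rewrite lw andbT /= inE; apply/orP; right.
  rewrite /nbhdS inE; apply/existsP; exists d; by rewrite inE eqxx.
rewrite /nbhdS inE => /existsP [d' /andP [/set1P -> edz]].
exists z => //.
have h1 : h z <= 1.
  apply: height_min; apply/existsP; exists w; rewrite lw andbT /= inE; apply/orP; right.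
  rewrite /nbhdS inE; apply/existsP; exists z; by rewrite inE eqxx.
have ezd : e z d by rewrite esym.
have := height_edge ezd. rewrite hd.
move: h1; case: (h z) => [|[|]] //.
Qed.
End Basic.

Section Main.
Variables (V : finType) (e : rel V) (p : nat) (s : 'I_p -> V) (k : 'I_p -> nat) (u : 'I_p -> nat -> V).
Hypothesis esym : symmetric e.
Hypothesis bal : balanced e.
Hypothesis hmax : tree_height e = 3.
Hypothesis sinj : injective s.
Hypothesis hV1 : [set s i | i : 'I_p] = Vh e 1.
Hypothesis hu1 : forall i, nbhd e (s i) :&: Vh e 2 = [set u i 1].
Hypothesis hk : forall i, k i = #|nbhd e (s i)|.
Hypothesis hl : forall i, [set u i (val a) | a : 'I_(k i).+1 & 2 <= val a] = nbhd e (s i) :&: Vh e 0.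
Local Notation h := (height e).

Lemma mem_nbhd v w : (w \in nbhd e v) = e v w.
Proof. by rewrite /nbhd inE. Qed.

Lemma adjh x y : e x y -> h y = (h x).+1 \/ h x = (h y).+1.
Proof.
move=> exy. have eyx : e y x by rewrite esym.
have h1 := height_edge esym exy; have h2 := height_edge esym eyx; have hb := bal exy.
case: (ltngtP (h x) (h y)) => H.
- by left; apply/eqP; rewrite eqn_leq h1 H.
- by right; apply/eqP; rewrite eqn_leq h2 H.
- by rewrite H eqxx in hb.
Qed.

Lemma hle3 v : h v <= 3.
Proof. rewrite -hmax /tree_height. exact: leq_bigmax. Qed.

Lemma card3 : 2 < #|V|.
Proof.
case: (ltnP 2 #|V|) => // le2. have : tree_height e <= 2.
  apply/bigmax_leqP => v _. exact: leq_trans (height_le e v) le2.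
by rewrite hmax.
Qed.

Lemma hs i : h (s i) = 1.
Proof. have : s i \in Vh e 1 by rewrite -hV1 imset_f. by rewrite inE => /eqP. Qed.

Lemma h1s y : h y = 1 -> exists j, y = s j.
Proof. move=> hy. have : y \in Vh e 1 by rewrite inE hy. rewrite -hV1 => /imsetP [j _ ->]. by exists j. Qed.

Lemma leaf_uniq w x y : is_leaf e w -> e w x -> e w y -> x = y.
Proof.
move/cards1P => [z hz] wx wy.
have : x \in nbhd e w by rewrite mem_nbhd.
have : y \in nbhd e w by rewrite mem_nbhd.
by rewrite hz => /set1P -> /set1P ->.
Qed.

Lemma u1P i : e (s i) (u i 1) /\ h (u i 1) = 2.
Proof.
have : u i 1 \in [set u i 1] by rewrite inE.
by rewrite -hu1 inE mem_nbhd inE => /andP [a /eqP b].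
Qed.

Lemma uLP i x : 2 <= x <= k i -> e (s i) (u i x) /\ h (u i x) = 0.
Proof.
move=> /andP [x2 xk]. have xlt : x < (k i).+1 by rewrite ltnS.
have : u i x \in nbhd e (s i) :&: Vh e 0.
  rewrite -hl; apply/imsetP; exists (Ordinal xlt) => //. by rewrite inE.
by rewrite inE mem_nbhd inE => /andP [a /eqP b].
Qed.

Lemma u_inv i y : e (s i) y ->
  (h y = 2 /\ y = u i 1) \/ (h y = 0 /\ exists2 x, 2 <= x <= k i & y = u i x).
Proof.
move=> ey. case: (adjh ey); rewrite hs => hy.
  left; split => //. have : y \in nbhd e (s i) :&: Vh e 2 by rewrite inE mem_nbhd inE ey hy.
  by rewrite hu1 => /set1P.
have hy0 : h y = 0 by case: hy.
right; split => //.
have : y \in nbhd e (s i) :&: Vh e 0 by rewrite inE mem_nbhd inE ey hy0.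
rewrite -hl => /imsetP [a]; rewrite inE => a2 ->. exists (val a) => //.
by rewrite a2 -ltnS ltn_ord.
Qed.

Lemma u_inj i x y : 2 <= x <= k i -> 2 <= y <= k i -> u i x = u i y -> x = y.
Proof.
move=> hx hy exy.
set A := [set a : 'I_(k i).+1 | 2 <= val a].
set f := fun a : 'I_(k i).+1 => u i (val a).
have k2 : 2 <= k i by case/andP: hx => a b; apply: leq_trans a b.
have cN : #|nbhd e (s i) :\: Vh e 2| = #|nbhd e (s i) :&: Vh e 0|.
  suff -> : nbhd e (s i) :\: Vh e 2 = nbhd e (s i) :&: Vh e 0 by [].
  apply/setP => z; rewrite !inE.
  case ez: (e (s i) z); rewrite ?andbF //=. case: (u_inv ez) => [[-> _]|[-> _]] //.
have cI : #|nbhd e (s i) :&: Vh e 2| = 1 by rewrite hu1 cards1.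
have cf : #|f @: A|.+1 = k i.
  have H := cardsID (Vh e 2) (nbhd e (s i)). rewrite cI cN -hl -(hk i) add1n in H.
  exact: H.
have cA : #|A|.+1 <= k i.
  have sub : A \subset ~: [set (ord0 : 'I_(k i).+1); inord 1].
    apply/subsetP => a; rewrite !inE => a2.
    rewrite negb_or; apply/andP; split; apply/negP => /eqP ea; move: a2; rewrite ea //=.
    by rewrite inordK // ltnS ltnW.
  have H := cardsC [set (ord0 : 'I_(k i).+1); inord 1].
  rewrite cards2 card_ord in H.
  have ne : (ord0 : 'I_(k i).+1) != inord 1.
    apply/eqP => /(congr1 val); rewrite /= inordK //. by rewrite ltnS ltnW.
  rewrite ne in H.
  have := subset_leq_card sub. lia.
have : #|f @: A| == #|A|.
  rewrite eqn_leq leq_imset_card /=. by rewrite -ltnS cf.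
move/imset_injP => inj.
have xlt : x < (k i).+1 by rewrite ltnS; case/andP: hx.
have ylt : y < (k i).+1 by rewrite ltnS; case/andP: hy.
have := inj (Ordinal xlt) (Ordinal ylt).
rewrite !inE /=. case/andP: hx => -> _; case/andP: hy => -> _.
by move=> /(_ isT isT exy) /(congr1 val).
Qed.


Lemma k_pos i : 0 < k i.
Proof. rewrite hk; apply/card_gt0P; exists (u i 1); rewrite mem_nbhd; by case: (u1P i). Qed.

Lemma uP i x : 1 <= x <= k i ->
  e (s i) (u i x) /\ ((h (u i x) = 2 /\ x = 1) \/ (h (u i x) = 0 /\ 2 <= x)).
Proof.
move=> /andP [x1 xk]. case: (ltngtP x 1) => [|x2|->].
- by rewrite ltnNge x1.
- have [] := uLP (_ : 2 <= x <= k i); first by rewrite x2 xk.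
  by move=> ?? ; split => //; right.
- by have [] := u1P i; split => //; left.
Qed.

Lemma mem_nbhdS D y : (y \in nbhdS e D) = [exists d in D, e d y].
Proof. by rewrite /nbhdS inE. Qed.

Lemma oddTD_mono (B C : {set V}) : B \subset C -> is_oddTD e B -> is_oddTD e C.
Proof.
move=> sBC /subsetP H; apply/subsetP => y /H; rewrite !mem_nbhdS => /existsP [d /andP [dB edy]].
apply/existsP; exists d; by rewrite (subsetP sBC _ dB) edy.
Qed.

Lemma min_rm D x : minimal_oddTD e D -> x \in D -> ~~ is_oddTD e (D :\ x).
Proof.
move=> /minsetP [_ mD] xD; apply/negP => H.
have := mD _ H (subD1set D x). move/setP/(_ x). by rewrite !inE eqxx xD.
Qed.

Lemma min_build D : is_oddTD e D -> (forall x, x \in D -> ~~ is_oddTD e (D :\ x)) ->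
  minimal_oddTD e D.
Proof.
move=> H1 H2; apply/minsetP; split => // B PB sBD.
apply/eqP; rewrite eqEsubset sBD /=; apply/subsetP => x xD.
apply/negPn/negP => xB. have := H2 _ xD. rewrite (oddTD_mono _ PB) //.
apply/subsetP => z zB; rewrite !inE (subsetP sBD _ zB) andbT.
apply/negP => /eqP zx; by rewrite -zx zB in xB.
Qed.

Lemma oddh y : odd (h y) -> h y = 1 \/ h y = 3.
Proof. have := hle3 y. by case: (h y) => [|[|[|[|]]]] //=; auto. Qed.

Lemma adj_par x y : e x y -> odd (h x) = ~~ odd (h y).
Proof. by case/adjh => ->; rewrite /= ?negbK. Qed.

Lemma D_even D : minimal_oddTD e D -> D \subset Veven e.
Proof.
move=> mD; apply/subsetP => d dD; rewrite inE; apply/negP => od.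
case/negP: (min_rm mD dD). apply/subsetP => y; rewrite inE => oy.
have /subsetP := minsetp mD. move/(_ y); rewrite inE oy => /(_ isT).
rewrite !mem_nbhdS => /existsP [z /andP [zD ezy]].
apply/existsP; exists z; rewrite !inE zD ezy andbT /= andbT.
apply/eqP => zd; subst z. by rewrite (adj_par ezy) oy in od.
Qed.

Lemma part1 D : minimal_oddTD e D -> exists a, in_range k a /\ D = Uset u a.
Proof.
move=> mD.
pose a i := if u i 1 \in D then 1 else
  (if [pick x : 'I_(k i).+1 | (2 <= val x) && (u i (val x) \in D)] is Some x then val x else 1).
have ha : forall i, (1 <= a i <= k i) /\ u i (a i) \in D.
  move=> i. rewrite /a. case: ifP => [H|H]; first by rewrite k_pos H.
  case: pickP => [x /andP [x2 xD] | none].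
    split => //; have := ltn_ord x; rewrite ltnS => xk.
    by rewrite xk andbT; apply: leq_trans x2.
  exfalso.
  have /subsetP := minsetp mD. move/(_ (s i)); rewrite inE hs => /(_ isT).
  rewrite mem_nbhdS => /existsP [z /andP [zD ezs]].
  have esz : e (s i) z by rewrite esym.
  case: (u_inv esz) => [[_ zu]|[_ [x /andP [x2 xk] zu]]]; first by rewrite -zu zD in H.
  have xlt : x < (k i).+1 by rewrite ltnS.
  by have := none (Ordinal xlt); rewrite /= x2 -zu zD.
exists a; split; first by move=> i; case: (ha i).
apply/setP => d; apply/idP/idP; last first.
  by case/imsetP => j _ ->; case: (ha j).
move=> dD. have := subsetP (D_even mD) _ dD; rewrite inE => ed.
have hd3 := hle3 d.
have : h d = 0 \/ h d = 2 by move: ed hd3; case: (h d) => [|[|[|[|]]]] //=; auto.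
case => hd.
- have /cards1P [w hw] : is_leaf e d by rewrite -height0 hd.
  have edw : e d w by rewrite -mem_nbhd hw inE.
  have hw1 : h w = 1 by case: (adjh edw); rewrite hd.
  have [j wj] := h1s hw1. subst w.
  case: (ha j) => rj zD.
  case: (eqVneq (u j (a j)) d) => [<-|ne]; first by apply/imsetP; exists j.
  exfalso; case/negP: (min_rm mD dD).
  apply/subsetP => y oy. have /subsetP := minsetp mD. move/(_ y oy).
  rewrite !mem_nbhdS => /existsP [z /andP [zD' ezy]].
  case: (eqVneq z d) => [zd|zd].
    subst z. have yw : y = s j by apply: (leaf_uniq (_ : is_leaf e d)); rewrite // -height0 hd.
    subst y. apply/existsP; exists (u j (a j)). rewrite !inE ne zD /=.
    by rewrite esym; case: (uP rj).
  by apply/existsP; exists z; rewrite !inE zd zD'.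
- have [x edx hx] := height2 esym card3 hd.
  have [j xj] := h1s hx. subst x.
  have esd : e (s j) d by rewrite esym.
  case: (u_inv esd) => [[_ du]|[h0]]; last by rewrite hd in h0.
  have aj : a j = 1 by rewrite /a -du dD.
  by apply/imsetP; exists j => //; rewrite aj.
Qed.


Lemma setDD_sub (S A : {set V}) : A \subset S -> S :\: (S :\: A) = A.
Proof.
move/subsetP=> H; apply/setP => x; rewrite !inE negb_and negbK.
case xA: (x \in A); first by rewrite (H _ xA).
by case: (x \in S).
Qed.

Lemma Uset_even a : in_range k a -> Uset u a \subset Veven e.
Proof.
move=> ra; apply/subsetP => z /imsetP [j _ ->]; rewrite inE.
by case: (uP (ra j)) => _ [[-> _]|[-> _]].
Qed.

Lemma facet_min a : in_range k a -> Seven_facet e (Veven e :\: Uset u a) ->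
  minimal_oddTD e (Uset u a).
Proof.
move=> ra [D [mD eq]].
have : Veven e :\: (Veven e :\: Uset u a) = Veven e :\: (Veven e :\: D) by rewrite eq.
by rewrite !setDD_sub ?Uset_even ?D_even // => ->.
Qed.

Lemma facetT b : in_range k b -> minimal_oddTD e (Uset u b) ->
  forall y, h y = 3 -> exists j, b j = 1 /\ e (u j 1) y.
Proof.
move=> rb mb y hy.
have /subsetP := minsetp mb. move/(_ y); rewrite inE hy => /(_ isT).
rewrite mem_nbhdS => /existsP [z /andP [/imsetP [j _ ->] ezy]].
exists j. case: (uP (rb j)) => _ [[_ bj]|[h0 _]]; first by rewrite -bj.
by case: (adjh ezy); rewrite hy h0.
Qed.

Lemma facetQ b : in_range k b -> minimal_oddTD e (Uset u b) ->
  forall j l, u l 1 = u j 1 -> b l = 1 -> b j = 1.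
Proof.
move=> rb mb j l ulj bl. apply/eqP/negP => bj.
have [esx] := uP (rb j). case => [[_ /eqP]|[h0 _]]; first exact: bj.
have xU : u j (b j) \in Uset u b by apply/imsetP; exists j.
case/negP: (min_rm mb xU).
apply/subsetP => y oy. have /subsetP := minsetp mb. move/(_ y oy).
rewrite !mem_nbhdS => /existsP [z /andP [zU ezy]].
case: (eqVneq z (u j (b j))) => [zx|zx]; last by apply/existsP; exists z; rewrite !inE zx zU.
subst z.
have lx : is_leaf e (u j (b j)) by rewrite -height0 h0.
have exs : e (u j (b j)) (s j) by rewrite esym.
have yw := leaf_uniq lx ezy exs.
subst y. apply/existsP; exists (u j 1).
have [e1 h2] := u1P j.
rewrite !inE esym e1 andbT; apply/andP; split.
  by apply/eqP => ex; move: h0; rewrite -ex h2.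
by apply/imsetP; exists l => //; rewrite bl.
Qed.

Lemma facet_suff c : in_range k c ->
  (forall y, h y = 3 -> exists j, c j = 1 /\ e (u j 1) y) ->
  (forall j l, u l 1 = u j 1 -> c l = 1 -> c j = 1) ->
  Seven_facet e (Veven e :\: Uset u c).
Proof.
move=> rc T Q. exists (Uset u c); split => //.
apply: min_build.
  apply/subsetP => y; rewrite inE => oy. rewrite mem_nbhdS.
  case: (oddh oy) => hy.
    have [j ->] := h1s hy. apply/existsP; exists (u j (c j)).
    rewrite esym (proj1 (uP (rc j))) andbT. by apply/imsetP; exists j.
  have [j [cj ej]] := T y hy. apply/existsP; exists (u j 1); rewrite ej andbT.
  by apply/imsetP; exists j => //; rewrite cj.
move=> x /imsetP [j _ ->]. apply/negP => /subsetP /(_ (s j)).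
rewrite inE hs => /(_ isT). rewrite mem_nbhdS => /existsP [z /andP [zin ezs]].
move: zin; rewrite !inE => /andP [zx /imsetP [l _ zl]]. subst z.
case: (uP (rc l)) => esl [[h2 cl]|[h0 cl2]].
  have esz : e (s j) (u l (c l)) by rewrite esym.
  case: (u_inv esz) => [[_ ulj]|[h0]]; last by rewrite h2 in h0.
  have ul1 : u l 1 = u j 1 by rewrite -ulj cl.
  have cj : c j = 1 by apply: (Q j l ul1 cl).
  by move: zx; rewrite cj -ulj eqxx.
have lz : is_leaf e (u l (c l)) by rewrite -height0 h0.
have esl' : e (u l (c l)) (s l) by rewrite esym.
have := leaf_uniq lz ezs esl'. move/sinj => jl; subst l.
by rewrite eqxx in zx.
Qed.


Lemma part2 a b : in_range k a -> in_range k b ->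
  Seven_facet e (Veven e :\: Uset u a) -> Seven_facet e (Veven e :\: Uset u b) ->
  ltP_order a b ->
  exists2 v : V, v \in (Veven e :\: Uset u b) :\: (Veven e :\: Uset u a) &
   exists c : 'I_p -> nat,
     [/\ in_range k c, Seven_facet e (Veven e :\: Uset u c), ltP_order c b &
         (Veven e :\: Uset u b) :\: (Veven e :\: Uset u c) = [set v]].
Proof.
move=> ra rb fa fb lab.
have mb := facet_min rb fb.
have Tb := facetT rb mb. have Qb := facetQ rb mb.
have [i ai] : exists i, a i < b i.
  case: lab => [lt|[_ [i [lt _]]]]; last by exists i.
  have : ~~ ([set j | a j == 1] \subset [set j | b j == 1]).
    apply/negP => /subset_leq_card. rewrite /ell in lt. by rewrite leqNgt lt.
  case/subsetPn => i; rewrite !inE => /eqP ai1 bi1. exists i; rewrite ai1.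
  by case/andP: (rb i); rewrite leq_eqVlt eq_sym (negbTE bi1).
have vU : u i (a i) \notin Uset u b.
  apply/imsetP => [[j _ eq]].
  case: (uP (ra i)) => esi [[h2 ai1]|[h0 ai2]].
    case: (uP (rb j)) => _ [[_ bj1]|[h0' _]]; last by rewrite -eq h2 in h0'.
    have ul : u j 1 = u i 1 by move: eq; rewrite ai1 bj1 => ->.
    have := Qb i j ul bj1. move=> bi1. by rewrite ai1 bi1 in ai.
  case: (uP (rb j)) => esj [[h2' _]|[h0' bj2]]; first by rewrite -eq h0 in h2'.
  have lz : is_leaf e (u i (a i)) by rewrite -height0 h0.
  have e1 : e (u i (a i)) (s i) by rewrite esym.
  have e2 : e (u i (a i)) (s j) by rewrite eq esym.
  have := leaf_uniq lz e1 e2. move/sinj => ij; subst j.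
  case/andP: (ra i) => _ aik; case/andP: (rb i) => _ bik.
  have := @u_inj i (a i) (b i); rewrite ai2 aik bj2 bik => /(_ isT isT eq) abi. by rewrite abi ltnn in ai.
have vE : u i (a i) \in Veven e by apply: (subsetP (Uset_even ra)); apply/imsetP; exists i.
have vA : u i (a i) \in Uset u a by apply/imsetP; exists i.
exists (u i (a i)); first by rewrite !in_setD vE vA vU.
case: (eqVneq (a i) 1) => ai1.
  pose c j := if u j 1 == u i 1 then 1 else b j.
  exists c; split.
  - move=> j; rewrite /c; case: ifP => _; [by rewrite leqnn k_pos | exact: rb j].
  - apply: facet_suff.
    + move=> j; rewrite /c; case: ifP => _; [by rewrite leqnn k_pos | exact: rb j].
    + move=> y hy. have [j [bj ej]] := Tb y hy. exists j; split => //.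
      by rewrite /c bj; case: ifP.
    + move=> j l ulj; rewrite /c. case: ifP => [/eqP H|H] cl; first by rewrite -ulj H eqxx.
      rewrite (Qb j l ulj cl). by case: ifP.
  - left. rewrite /ell. apply: proper_card. apply/properP; split.
      apply/subsetP => j; rewrite !inE /c => bj; by case: ifP.
    exists i; first by rewrite inE /c eqxx.
    by rewrite inE -ai1 neq_ltn ai orbT.
  - apply/setP => x; rewrite !in_setD in_set1. apply/idP/idP.
      case/andP => H1 /andP [xb xE]. rewrite xE andbT negbK in H1.
      case/imsetP: H1 => j _ xj; subst x. move: xb; rewrite /c; case: ifP => [/eqP H|H] xb.
        by rewrite H ai1.
      by case/negP: xb; apply/imsetP; exists j.
    move/eqP ->. rewrite vE vU /= !andbT negbK.
    by apply/imsetP; exists i => //; rewrite /c eqxx ai1.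
have ai2 : 2 <= a i by case/andP: (ra i); rewrite leq_eqVlt eq_sym (negbTE ai1).
pose c j := if j == i then a i else b j.
have cb1 : forall j, (c j == 1) = (b j == 1).
  move=> j; rewrite /c; case: (eqVneq j i) => [->|ne] //.
  rewrite (negbTE ai1). symmetry; apply/negbTE; rewrite neq_ltn; apply/orP; right.
  exact: leq_trans ai2 (ltnW ai).
have rc : in_range k c.
  by move=> j; rewrite /c; case: (eqVneq j i) => [->|_]; [exact: ra i | exact: rb j].
exists c; split => //.
- apply: facet_suff => //.
  + move=> y hy. have [j [bj ej]] := Tb y hy. exists j; split => //.
    by apply/eqP; rewrite cb1 bj.
  + move=> j l ulj cl. apply/eqP; rewrite cb1; apply/eqP; apply: (Qb j l ulj).
    by apply/eqP; rewrite -cb1 cl.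
- right; split.
    rewrite /ell. have -> : [set j | c j == 1] = [set j | b j == 1].
      by apply/setP => j; rewrite !inE cb1.
    by [].
  exists i; split; first by rewrite /c eqxx.
  move=> j ji; rewrite /c; case: (eqVneq j i) => [jE|] //. by rewrite jE ltnn in ji.
- apply/setP => x; rewrite !in_setD in_set1. apply/idP/idP.
    case/andP => H1 /andP [xb xE]. rewrite xE andbT negbK in H1.
    case/imsetP: H1 => j _ xj; subst x. move: xb; rewrite /c; case: (eqVneq j i) => [->|H] xb //.
    by case/negP: xb; apply/imsetP; exists j.
  move/eqP ->. rewrite vE vU /= !andbT negbK.
  by apply/imsetP; exists i => //; rewrite /c eqxx.
Qed.

End Main.

Unset Implicit Arguments.

Theorem theorem4p22 (V : finType) (e : rel V)
  (p : nat) (s : 'I_p -> V) (k : 'I_p -> nat) (u : 'I_p -> nat -> V) :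
  is_tree e -> balanced e -> unmixed e -> tree_height e = 3 ->
  (* labeling *)
  injective s ->
  [set s i | i : 'I_p] = Vh e 1 ->
  (forall i : 'I_p, nbhd e (s i) :&: Vh e 2 = [set u i 1]) ->
  (forall i : 'I_p, k i = #|nbhd e (s i)|) ->
  (forall i : 'I_p,
     [set u i (val a) | a : 'I_(k i).+1 & 2 <= val a] = nbhd e (s i) :&: Vh e 0) ->
  (* every facet has the form V_even \ {u_{1,a_1},...,u_{p,a_p}} *)
  (forall F : {set V}, Seven_facet e F ->
     exists a : 'I_p -> nat, in_range k a /\ F = Veven e :\: Uset u a) /\
  (* ordering facets by <_P of nu(F) is a shelling *)
  (forall a b : 'I_p -> nat,
     in_range k a -> in_range k b ->
     Seven_facet e (Veven e :\: Uset u a) ->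
     Seven_facet e (Veven e :\: Uset u b) ->
     ltP_order a b ->
     exists2 v : V,
       v \in (Veven e :\: Uset u b) :\: (Veven e :\: Uset u a) &
       exists c : 'I_p -> nat,
         [/\ in_range k c, Seven_facet e (Veven e :\: Uset u c), ltP_order c b &
             (Veven e :\: Uset u b) :\: (Veven e :\: Uset u c) = [set v]]).
Proof.
move=> [esym _] bal _ hmax sinj hV1 hu1 hk hl; split.
  move=> F [D [mD ->]].
  have [a [ra ->]] := part1 esym bal hmax hV1 hu1 hk hl mD.
  by exists a.
move=> a b ra rb fa fb lab.
exact: (part2 esym bal hmax sinj hV1 hu1 hk hl ra rb fa fb lab).
Qed.
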